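(* Let $G=(V,E)$ be a finite simple graph and $v\in V$. Let $G-v$ be the graph obtained from $G$ by deleting $v$ and all edges incident to $v$, and let $G/v$ be the graph obtained from $G$ by deleting $v$ and making the open neighbourhood $N_G(v)$ a clique (already adjacent pairs remain simply adjacent). Then $$\frac{\gamma_{coe}(G-v)+\gamma_{coe}(G/v)}{2}-\deg(v)+1\leq \gamma_{coe}(G)\leq \frac{\gamma_{coe}(G-v)+\gamma_{coe}(G/v)}{2}+\deg(v)+1.$$
   Context: All graphs are finite and simple. For a graph $G=(V,E)$ and $v\in V$, $N_G(v)=\{u\in V: uv\in E\}$ and $\deg(v)=|N_G(v)|$. A set $D\subseteq V$ is a dominating set if every vertex of $V\setminus D$ is adjacent to at least one vertex of $D$. A dominating set $D$ is a co-even dominating set if $\deg(v)$ is even for every $v\in V\setminus D$ (degrees taken in the graph under consideration). The co-even domination number $\gamma_{coe}(G)$ is the minimum cardinality of a co-even dominating set of $G$. *)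

(* Defs.v *)
(* A finite simple graph is given by a vertex set V : {set T}
   inside a finType T together with a symmetric irreflexive adjacency relation
   e : rel T (only edges between vertices of V matter). *)
From mathcomp Require Import all_boot all_order all_algebra.
Set Implicit Arguments. Unset Strict Implicit. Unset Printing Implicit Defensive.

Section Graphs.
Variable T : finType.

Definition simple_graph (e : rel T) : Prop := symmetric e /\ irreflexive e.

Definition nbhd (V : {set T}) (e : rel T) (x : T) : {set T} := [set y in V | e x y].
Definition deg (V : {set T}) (e : rel T) (x : T) : nat := #|nbhd V e x|.

Definition dominating (V : {set T}) (e : rel T) (D : {set T}) : bool :=
  (D \subset V) && [forall x in V :\: D, [exists y in D, e x y]].

Definition coeven_dominating (V : {set T}) (e : rel T) (D : {set T}) : bool :=
  dominating V e D && [forall x in V :\: D, ~~ odd (deg V e x)].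

Definition has_coe_of_size (V : {set T}) (e : rel T) (n : nat) : bool :=
  [exists D : {set T}, coeven_dominating V e D && (#|D| == n)].

Lemma has_coe_V (V : {set T}) (e : rel T) : exists n, has_coe_of_size V e n.
Proof.
exists #|V|; apply/existsP; exists V.
rewrite /coeven_dominating /dominating subxx eqxx /= andbT.
by apply/andP; split; apply/forallP => x; rewrite setDv inE.
Qed.

Definition gamma_coe (V : {set T}) (e : rel T) : nat := ex_minn (has_coe_V V e).

Definition del_vertex (V : {set T}) (v : T) : {set T} := V :\ v.

Definition contract_rel (V : {set T}) (e : rel T) (v : T) : rel T :=
  fun x y => e x y || [&& x != y, x \in nbhd V e v & y \in nbhd V e v].

End Graphs.

(* Main.v *)
Require Import Defs.
From mathcomp Require Import all_boot all_order all_algebra.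
From mathcomp Require Import lra zify.
Import Order.TTheory GRing.Theory Num.Theory.

Section Aux.
Variable T : finType.
Implicit Types (V D : {set T}) (e : rel T).

Lemma gamma_le V e D : coeven_dominating V e D -> gamma_coe V e <= #|D|.
Proof.
move=> HD; rewrite /gamma_coe; case: ex_minnP => m _ H; apply: H.
by apply/existsP; exists D; rewrite HD eqxx.
Qed.

Lemma gamma_ex V e : exists2 D, coeven_dominating V e D & #|D| = gamma_coe V e.
Proof.
rewrite /gamma_coe; case: ex_minnP => m /existsP [D /andP [HD /eqP HE]] _.
by exists D.
Qed.

Variables (V : {set T}) (e e' : rel T) (v : T).
Hypothesis Hs : symmetric e.
Hypothesis Hi : irreflexive e.
Hypothesis vV : v \in V.
Hypothesis He' : forall x y, x \in V -> x \notin nbhd V e v -> e' x y = e x y.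

Lemma nb x : x \in V -> x \notin nbhd V e v -> nbhd (V :\ v) e' x = nbhd V e x.
Proof.
move=> xV xN; apply/setP => y; rewrite !inE He' //.
case: (eqVneq y v) => [->|] //=.
move: xN; rewrite !inE xV /= => xN.
by rewrite Hs (negbTE xN) andbF.
Qed.

Lemma upper D1 : coeven_dominating (V :\ v) e' D1 ->
  coeven_dominating V e (v |: (D1 :|: nbhd V e v)).
Proof.
case/andP => /andP [sub dom] ev.
apply/andP; split; first (apply/andP; split).
- apply/subsetP => x; rewrite in_setU1 in_setU => /orP [/eqP->//|/orP [xD|]].
    by move/subsetP: sub => /(_ x xD); rewrite !inE => /andP[].
  by rewrite inE => /andP [].
- apply/forallP => x; apply/implyP => /setDP [xV].
  rewrite in_setU1 in_setU => /norP [xv /norP [xD1 xN]].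
  have xV' : x \in (V :\ v) :\: D1 by rewrite !inE xv xD1 xV.
  move/forallP: dom => /(_ x); rewrite xV' /= => /existsP [y /andP [yD1 exy]].
  apply/existsP; exists y; rewrite in_setU1 in_setU yD1 orbT /=.
  by rewrite -(He' x y xV xN).
- apply/forallP => x; apply/implyP => /setDP [xV].
  rewrite in_setU1 in_setU => /norP [xv /norP [xD1 xN]].
  have xV' : x \in (V :\ v) :\: D1 by rewrite !inE xv xD1 xV.
  move/forallP: ev => /(_ x); rewrite xV' /=.
  by rewrite /deg nb.
Qed.

Lemma upper_card D1 : #|v |: (D1 :|: nbhd V e v)| <= #|D1| + deg V e v + 1.
Proof.
rewrite /deg; have := cardsU1 v (D1 :|: nbhd V e v).
have := cardsU D1 (nbhd V e v).
have := leq_subr #|D1 :&: nbhd V e v| (#|D1| + #|nbhd V e v|).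
case: (v \in _); lia.
Qed.

Lemma lower D : coeven_dominating V e D ->
  exists2 D1, coeven_dominating (V :\ v) e' D1 & #|D1| + 1 <= #|D| + deg V e v.
Proof.
case/andP => /andP [sub dom] ev.
exists ((D :\ v) :|: nbhd V e v).
  apply/andP; split; first (apply/andP; split).
  - apply/subsetP => x; rewrite in_setU => /orP [|].
      rewrite !inE => /andP [-> xD]; by move/subsetP: sub => /(_ x xD).
    rewrite !inE => /andP [-> evx]; rewrite andbT.
    by apply/eqP => xv; move: evx; rewrite xv Hi.
  - apply/forallP => x; apply/implyP; rewrite in_setD in_setU => /andP [/norP [xDv xN]].
    rewrite in_setD1 => /andP [xv xV].
    have xD : x \notin D by move: xDv; rewrite in_setD1 xv.
    move/forallP: dom => /(_ x); rewrite in_setD xD xV /= => /existsP [y /andP [yD exy]].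
    apply/existsP; exists y; rewrite in_setU in_setD1 yD andbT He' //.
    rewrite exy andbT.
    apply/orP; left; apply/eqP => yv; move: xN; rewrite !inE xV Hs -yv exy.
    by [].
  - apply/forallP => x; apply/implyP; rewrite in_setD in_setU => /andP [/norP [xDv xN]].
    rewrite in_setD1 => /andP [xv xV].
    have xD : x \notin D by move: xDv; rewrite in_setD1 xv.
    move/forallP: ev => /(_ x); rewrite in_setD xD xV /=.
    by rewrite /deg nb.
rewrite /deg.
have H1 := cardsUI (D :\ v) (nbhd V e v).
have H2 := cardsD1 v D.
case vD: (v \in D).
  by move: H2; rewrite vD /=; lia.
have : 0 < #|(D :\ v) :&: nbhd V e v|.
  move/forallP: dom => /(_ v); rewrite in_setD vD vV /= => /existsP [y /andP [yD evy]].
  have yV : y \in V by move/subsetP: sub => /(_ y yD).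
  have yv : y != v by apply/eqP => yv; move: evy; rewrite yv Hi.
  by apply/card_gt0P; exists y; rewrite !inE yD evy yv yV.
move=> Hp; move: H2; rewrite vD /= add0n => H2; lia.
Qed.

Lemma bounds : (gamma_coe V e <= gamma_coe (V :\ v) e' + deg V e v + 1)%N /\
   (gamma_coe (V :\ v) e' + 1 <= gamma_coe V e + deg V e v)%N.
Proof.
split.
  have [D1 HD1 <-] := gamma_ex (V :\ v) e'.
  apply: leq_trans (upper_card D1); apply: gamma_le; exact: upper HD1.
have [D HD <-] := gamma_ex V e.
have [D1 HD1 Hc] := @lower D HD.
  apply: leq_trans Hc; rewrite leq_add2r; apply: gamma_le; exact: HD1.
Qed.
End Aux.

Local Open Scope ring_scope.

Theorem mainTheorem5 (T : finType) (V : {set T}) (e : rel T) (v : T) :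
  simple_graph e -> v \in V ->
  let g  := (gamma_coe V e)%:R : rat in
  let g1 := (gamma_coe (del_vertex V v) e)%:R : rat in
  let g2 := (gamma_coe (del_vertex V v) (contract_rel V e v))%:R : rat in
  let d  := (deg V e v)%:R : rat in
  (g1 + g2) / 2 - d + 1 <= g /\ g <= (g1 + g2) / 2 + d + 1.
Proof.
move=> [Hs Hi] vV g g1 g2 d.
have [A1 B1] := @bounds T V e e v Hs Hi vV (fun x y _ _ => erefl).
have Hc : forall x y, x \in V -> x \notin nbhd V e v -> contract_rel V e v x y = e x y.
  by move=> x y _ xN; rewrite /contract_rel (negbTE xN) andbF orbF.
have [A2 B2] := @bounds T V e (contract_rel V e v) v Hs Hi vV Hc.
move: A1 B1 A2 B2; rewrite -!(ler_nat rat) !natrD -/g -/d.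
rewrite /g1 /g2 /del_vertex.
set a := (gamma_coe (V :\ v) e)%:R; set b := (gamma_coe (V :\ v) _)%:R.
move=> *; split; lra.
Qed.
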